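(* Let $H$ be a complex Hilbert space and let $T\in B(H)$ be written as $T=A+iB$ with $A=\frac{T+T^*}{2}$ and $B=\frac{T-T^*}{2i}$ (both self-adjoint). Let $n\geq 2$ be an integer. If $T^n=0$ and either $A\geq 0$ or $B\geq 0$, then $T=0$.
   Context: $B(H)$ denotes the algebra of all bounded linear operators from $H$ to $H$. An operator $S\in B(H)$ is positive, written $S\geq 0$, if $\langle Sx,x\rangle\geq 0$ for all $x\in H$. *)

(* Defs.v *)
From HB Require Import structures.
From mathcomp Require Import all_boot all_order all_algebra.
From mathcomp Require Import complex.
From mathcomp Require Import reals.
Set Implicit Arguments. Unset Strict Implicit. Unset Printing Implicit Defensive.
Import Order.TTheory GRing.Theory Num.Theory.
Local Open Scope ring_scope.
Local Open Scope complex_scope.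

Definition is_inner_product (R : realType) (H : lmodType R[i])
    (ip : H -> H -> R[i]) : Prop :=
  [/\ (forall (a : R[i]) (x y z : H), ip (a *: x + y) z = a * ip x z + ip y z),
      (forall x y : H, ip x y = (ip y x)^*),
      (forall x : H, 0 <= ip x x) &
      (forall x : H, ip x x = 0 -> x = 0)].

Definition ipnorm (R : realType) (H : lmodType R[i]) (ip : H -> H -> R[i])
    (x : H) : R := Num.sqrt (complex.Re (ip x x)).

Definition ip_complete (R : realType) (H : lmodType R[i])
    (ip : H -> H -> R[i]) : Prop :=
  forall u : nat -> H,
    (forall e : R, 0 < e -> exists N : nat, forall m n : nat,
        (N <= m)%N -> (N <= n)%N -> ipnorm ip (u m - u n) < e) ->
    exists l : H, forall e : R, 0 < e -> exists N : nat, forall n : nat,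
        (N <= n)%N -> ipnorm ip (u n - l) < e.

Definition is_hilbert (R : realType) (H : lmodType R[i])
    (ip : H -> H -> R[i]) : Prop :=
  is_inner_product ip /\ ip_complete ip.

Definition bounded_op (R : realType) (H : lmodType R[i])
    (ip : H -> H -> R[i]) (T : H -> H) : Prop :=
  linear T /\ exists M : R, forall x : H, ipnorm ip (T x) <= M * ipnorm ip x.

Definition is_adjoint (R : realType) (H : lmodType R[i])
    (ip : H -> H -> R[i]) (T Ts : H -> H) : Prop :=
  forall x y : H, ip (T x) y = ip x (Ts y).

(* S >= 0 : <S x, x> >= 0 for all x (order of R[i]: real and nonnegative). *)
Definition positive_op (R : realType) (H : lmodType R[i])
    (ip : H -> H -> R[i]) (Sop : H -> H) : Prop :=
  forall x : H, 0 <= ip (Sop x) x.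

Definition re_part (R : realType) (H : lmodType R[i]) (T Ts : H -> H) : H -> H :=
  fun x => (2%:R)^-1 *: (T x + Ts x).
Definition im_part (R : realType) (H : lmodType R[i]) (T Ts : H -> H) : H -> H :=
  fun x => (2%:R * 'i)^-1 *: (T x - Ts x).

(* Main.v *)
Require Import Defs.
From HB Require Import structures.
From mathcomp Require Import all_boot all_order all_algebra.
From mathcomp Require Import complex.
From mathcomp Require Import reals.
From mathcomp Require Import ring lra.
Import Order.TTheory GRing.Theory Num.Theory.
Local Open Scope ring_scope.
Local Open Scope complex_scope.

Lemma key_cplx (R : realType) (w k : R[i]) :
  (forall t : R[i], 0 <= complex.Re (t * w + t * t^* * k)) -> w = 0.
Proof.
case: w => a b; case: k => u v => Ht.
set s : R := (1 + u ^+ 2)^-1.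
have hpos : 0 < 1 + u ^+ 2 by rewrite ltr_pwDl // sqr_ge0.
have hs : s * (1 + u ^+ 2) = 1 by rewrite mulVf // gt_eqF.
have s0 : 0 < s by rewrite invr_gt0.
have := Ht ((- (s * a)) +i* (s * b)).
simpc; rewrite /=.
move=> H.
have H1 : 0 <= s * ((a ^+ 2 + b ^+ 2) * (s * u - 1)).
  have -> : s * ((a ^+ 2 + b ^+ 2) * (s * u - 1)) = - (s * a * a) - s * b * b +
    ((s * a * (s * a) + s * b * (s * b)) * u -
     (s * a * (s * b) - s * b * (s * a)) * v) by ring.
  exact: H.
have H2 : 0 <= (a ^+ 2 + b ^+ 2) * (s * u - 1).
  by rewrite -(pmulr_rge0 _ s0).
have H3 : s * u - 1 < 0 by nra.
have H4 : a ^+ 2 + b ^+ 2 <= 0 by nra.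
have -> : a = 0 by nra.
have -> : b = 0 by nra.
by [].
Qed.

Section Ops.
Variables (R : realType) (H : lmodType R[i]) (ip : H -> H -> R[i]).
Hypothesis hip : is_inner_product ip.

Lemma ip0l z : ip 0 z = 0.
Proof.
case: hip => h _ _ _.
have := h 1 0 0 z; rewrite scaler0 addr0 mul1r => /esym/eqP.
by rewrite -subr_eq0 addrK => /eqP.
Qed.

Lemma ipDl x y z : ip (x + y) z = ip x z + ip y z.
Proof. by case: hip => h _ _ _; rewrite -{1}[x]scale1r h mul1r. Qed.

Lemma ipZl a x z : ip (a *: x) z = a * ip x z.
Proof. by case: hip => h _ _ _; rewrite -[a *: x]addr0 h ip0l addr0. Qed.

Lemma ipr a u v w : ip u (a *: v + w) = a^* * ip u v + ip u w.
Proof.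
case: hip => h hc _ _.
by rewrite hc h rmorphD rmorphM /= -!hc.
Qed.

Lemma step (T : H -> H) (c : R[i]) x y :
  linear T -> c != 0 ->
  (forall w, 0 <= complex.Re (c * ip (T w) w)) ->
  T x = 0 -> ip (T y) x = 0.
Proof.
move=> Tl c0 Hp Tx.
have E t : ip (T (t *: y + x)) (t *: y + x) = t * (t^* * ip (T y) y + ip (T y) x).
  by rewrite Tl Tx addr0 ipZl ipr.
have : c * ip (T y) x = 0.
  apply: (@key_cplx R _ (c * ip (T y) y)) => t.
  have := Hp (t *: y + x); rewrite E.
  by have -> : c * (t * (t^* * ip (T y) y + ip (T y) x)) =
    t * (c * ip (T y) x) + t * t^* * (c * ip (T y) y) by ring.
by move/eqP; rewrite mulf_eq0 (negbTE c0) /= => /eqP.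
Qed.

End Ops.

Theorem theorem1p1 (R : realType) (H : lmodType R[i]) (ip : H -> H -> R[i])
    (T Ts : H -> H) (n : nat) :
  is_hilbert ip -> bounded_op ip T -> is_adjoint ip T Ts ->
  (2 <= n)%N ->
  (forall x : H, iter n T x = 0) ->
  (positive_op ip (re_part T Ts) \/ positive_op ip (im_part T Ts)) ->
  forall x : H, T x = 0.
Proof.
move=> [hip _] [Tl _] hadj hn hnil hpos.
have hip' := hip.
case: hip' => _ hc _ hdef.
have two0 : (2%:R : R[i]) != 0 by rewrite pnatr_eq0.
have i0 : ('i : R[i]) != 0 by rewrite eq_complex /= oner_eq0 andbF.
have hTs w : ip (Ts w) w = (ip (T w) w)^*.
  by rewrite hc -hadj.
have [c [c0 Hc]] : exists c : R[i], c != 0 /\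
    forall w, 0 <= complex.Re (c * ip (T w) w).
  case: hpos => hp; [exists 1 | exists (- 'i)]; split => //.
  - by rewrite oner_eq0.
  - move=> w; have := hp w; rewrite /re_part ipZl // ipDl // hTs addcJ.
    by rewrite mulrA mulVf // !mul1r ler0c.

  - by rewrite oppr_eq0.
  - move=> w; have := hp w; rewrite /im_part ipZl // -scaleN1r ipDl // ipZl // hTs.
    have -> : ip (T w) w + (-1) * (ip (T w) w)^* = ip (T w) w - (ip (T w) w)^* by ring.
    rewrite subcJ.
    have -> : (2%:R * 'i)^-1 * (2%:R * (complex.Im (ip (T w) w))%:C * 'i) =
       (complex.Im (ip (T w) w))%:C by field.
    rewrite ler0c.
    by case: (ip (T w) w) => a b /=; simpc.
have down m : (forall x, iter m.+2 T x = 0) -> forall x, iter m.+1 T x = 0.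
  move=> Hm x.
  have Tv : T (iter m.+1 T x) = 0 by rewrite -iterS Hm.
  have := @step R H ip hip T c (iter m.+1 T x) (iter m T x) Tl c0 Hc Tv.
  rewrite -iterS => /hdef.
  by [].
have all1 k : (forall x, iter k.+1 T x = 0) -> forall x, iter 1 T x = 0.
  elim: k => [//|k IH] Hk; apply: IH; exact: down.
case: n hn hnil => [//|[//|k]] _ hk x.
exact: (all1 k.+1 hk x).
Qed.
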